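(* Let $S$ be a supersymmetric numerical semigroup with multiplicity $e$ and blowup $B$. Then ${\rm d}_{\max}(S)=d(F(B)+e;B^{\mathcal D})$.
   Context: $S$ is a numerical semigroup (a submonoid of $\mathbb N$ with finite complement) with minimal generators $e<a_1<\dots<a_t$. An $S$-factorization of $n$ is $(c_0,\dots,c_t)\in\mathbb N^{t+1}$ with $c_0e+\sum c_ia_i=n$, of length $\sum c_i$. ${\rm ord}(n;S)$ is the maximal such length, ${\rm d}_{\max}(n;S)$ is the number of factorizations of maximal length, and ${\rm d}_{\max}(S)=\max_{n\in S}{\rm d}_{\max}(n;S)$. $S$ is additive if ${\rm ord}(u+e;S)={\rm ord}(u;S)+1$ for all $u\in S$. With $\operatorname{Ap}(S;e)=\{w\in S:w-e\notin S\}=\{w_0<w_1<\dots<w_{e-1}\}$, $S$ is supersymmetric if $S$ is additive and, whenever $i+j=e-1$, both $w_i+w_j=w_{e-1}$ and ${\rm ord}(w_i;S)+{\rm ord}(w_j;S)={\rm ord}(w_{e-1};S)$ hold. The blowup is $B=\langle e,d_1,\dots,d_t\rangle$ with $d_i=a_i-e$, and $\mathcal D=(e,d_1,\dots,d_t)$. $d(b;B^{\mathcal D})$ is the number of tuples $(x_0,\dots,x_t)\in\mathbb N^{t+1}$ with $x_0e+\sum x_id_i=b$. $F(B)$ is the largest integer not in $B$. *)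

(* Defs.v *)
From mathcomp Require Import all_boot all_order all_algebra.
Set Implicit Arguments. Unset Strict Implicit. Unset Printing Implicit Defensive.
Import Order.TTheory GRing.Theory Num.Theory.

(* A numerical semigroup is given by the increasing list of its minimal
   generators g = [:: e; a_1; ...; a_t].  All generators are >= 1, so a
   factorization (c_0,...,c_t) of n has every c_i <= n; we therefore encode
   factorizations as finite functions 'I_(size g) -> 'I_n.+1. *)

Definition fact_set (g : seq nat) (n : nat) : {set {ffun 'I_(size g) -> 'I_n.+1}} :=
  [set c : {ffun 'I_(size g) -> 'I_n.+1} | \sum_(i < size g) (c i : nat) * nth 0 g i == n].

Definition inS (g : seq nat) (n : nat) : bool := fact_set g n != set0.

Definition flen (m k : nat) (c : {ffun 'I_m -> 'I_k}) : nat := \sum_(i < m) (c i : nat).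

Definition ordS (g : seq nat) (n : nat) : nat := \max_(c in fact_set g n) flen c.

Definition dmax (g : seq nat) (n : nat) : nat :=
  #|[set c in fact_set g n | flen c == ordS g n]|.

Definition is_dmaxS (g : seq nat) (v : nat) : Prop :=
  (exists n, inS g n /\ dmax g n = v) /\ (forall n, inS g n -> dmax g n <= v).

Definition mult (g : seq nat) : nat := head 0 g.

Definition drop_gen (g : seq nat) (i : nat) : seq nat :=
  [seq nth 0 g j | j <- iota 0 (size g) & j != i].

Definition num_semigroup_mingens (g : seq nat) : Prop :=
  [/\ 0 < mult g,
      sorted ltn g,
      (exists N, forall n, N <= n -> inS g n) &
      (forall i, i < size g -> ~~ inS (drop_gen g i) (nth 0 g i))].

Definition inAp (g : seq nat) (w : nat) : bool :=
  inS g w && ~~ ((mult g <= w) && inS g (w - mult g)).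

(* index of w in the increasing enumeration w_0 < w_1 < ... of Ap(S;e) *)
Definition ap_index (g : seq nat) (w : nat) : nat := count (inAp g) (iota 0 w).

Definition additive (g : seq nat) : Prop :=
  forall u, inS g u -> ordS g (u + mult g) = (ordS g u).+1.

Definition supersymmetric (g : seq nat) : Prop :=
  additive g /\
  forall wi wj wm, inAp g wi -> inAp g wj -> inAp g wm ->
    ap_index g wm = (mult g).-1 ->
    ap_index g wi + ap_index g wj = (mult g).-1 ->
    wi + wj = wm /\ ordS g wi + ordS g wj = ordS g wm.

Definition blowup (g : seq nat) : seq nat :=
  mult g :: [seq a - mult g | a <- behead g].

(* f is the Frobenius number (largest integer not in the semigroup generated
   by g); negative integers are not in the semigroup, so f = -1 if it is N *)
Definition frobenius (g : seq nat) (f : int) : Prop :=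
  ~~ ((0 <= f)%R && inS g (absz f)) /\
  forall z : int, (f < z)%R -> (0 <= z)%R && inS g (absz z).

(* Main.v *)
Require Import Defs.
From mathcomp Require Import all_boot all_order all_algebra.
From mathcomp Require Import zify.
Set Implicit Arguments. Unset Strict Implicit. Unset Printing Implicit Defensive.

Local Notation ordG := Defs.ordS.
Definition sumg (g : seq nat) (x : nat -> nat) := \sum_(i < size g) x i * nth 0 g i.
Definition lenN (K : nat) (x : nat -> nat) := \sum_(i < K) x i.
Definition toN K n (c : {ffun 'I_K -> 'I_n}) (i : nat) : nat :=
  if insub i is Some j then (c j : nat) else 0.
Definition zero0 (x : nat -> nat) (i : nat) := if i == 0 then 0 else x i.
Definition delta0 (k : nat) (i : nat) := if i == 0 then k else 0.
Definition posg g := forall i, i < size g -> 0 < nth 0 g i.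

Lemma toN_val K n (c : {ffun 'I_K -> 'I_n}) (j : 'I_K) : toN c j = c j.
Proof. by rewrite /toN valK. Qed.

Lemma mem_fact g n (c : {ffun 'I_(size g) -> 'I_n.+1}) :
  (c \in fact_set g n) = (sumg g (toN c) == n).
Proof. rewrite inE /sumg; congr (_ == _); apply eq_bigr => i _; by rewrite toN_val. Qed.

Lemma flenE K n (c : {ffun 'I_K -> 'I_n}) : flen c = lenN K (toN c).
Proof. rewrite /flen /lenN; apply eq_bigr => i _; by rewrite toN_val. Qed.

Lemma sumg_ext g x y : (forall i, i < size g -> x i = y i) -> sumg g x = sumg g y.
Proof. move=> H; apply eq_bigr => i _; by rewrite H. Qed.

Lemma lenN_ext K x y : (forall i, i < K -> x i = y i) -> lenN K x = lenN K y.
Proof. move=> H; apply eq_bigr => i _; by rewrite H. Qed.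

Lemma sumgD g x y : sumg g (fun i => x i + y i) = sumg g x + sumg g y.
Proof. rewrite /sumg -big_split; apply eq_bigr => i _; by rewrite mulnDl. Qed.

Lemma lenND K x y : lenN K (fun i => x i + y i) = lenN K x + lenN K y.
Proof. by rewrite /lenN -big_split. Qed.

Lemma sumg_delta g k : 0 < size g -> sumg g (delta0 k) = k * nth 0 g 0.
Proof.
case: g => [//|a s] _; rewrite /sumg /= big_ord_recl big1 => [|i _];
  by rewrite /delta0 /= ?addn0.
Qed.

Lemma lenN_delta K k : 0 < K -> lenN K (delta0 k) = k.
Proof.
case: K => [//|K] _; rewrite /lenN big_ord_recl big1 => [|i _];
  by rewrite /delta0 /= ?addn0.
Qed.

Lemma split0 x i : x i = zero0 x i + delta0 (x 0) i.
Proof. rewrite /zero0 /delta0; case: eqP => [->|]; lia. Qed.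

Lemma sumg_split g x : 0 < size g -> sumg g x = sumg g (zero0 x) + x 0 * nth 0 g 0.
Proof.
move=> H; rewrite -sumg_delta // -sumgD; apply sumg_ext => i _; exact: split0.
Qed.

Lemma lenN_split K x : 0 < K -> lenN K x = lenN K (zero0 x) + x 0.
Proof.
move=> H; rewrite -(lenN_delta (x 0) H) -lenND; apply lenN_ext => i _; exact: split0.
Qed.

Lemma term_le g x j : j < size g -> posg g -> x j <= sumg g x.
Proof.
move=> Hj Hp; rewrite /sumg (bigD1 (Ordinal Hj)) //=.
apply: leq_trans (leq_addr _ _); rewrite leq_pmulr //; exact: Hp.
Qed.

Lemma len_le_sum g x : posg g -> lenN (size g) x <= sumg g x.
Proof.
move=> Hp; rewrite /lenN /sumg; apply leq_sum => i _.
rewrite leq_pmulr //; exact: Hp.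
Qed.

Lemma mk_fact g n x : posg g -> sumg g x = n ->
  exists2 c : {ffun 'I_(size g) -> 'I_n.+1}, c \in fact_set g n &
    forall j : 'I_(size g), (c j : nat) = x j.
Proof.
move=> Hp Hs.
have Hc : forall j : 'I_(size g), (@inord n (x j) : nat) = x j.
  move=> j; rewrite inordK // ltnS -Hs; exact: term_le.
exists [ffun j : 'I_(size g) => (inord (x j) : 'I_n.+1)]; last by move=> j; rewrite ffunE Hc.
rewrite mem_fact -Hs; apply/eqP; apply sumg_ext => i Hi.
change i with (nat_of_ord (Ordinal Hi)); rewrite toN_val ffunE inordK // ltnS; exact: term_le.
Qed.

Lemma inSP g n : posg g -> reflect (exists x, sumg g x = n) (inS g n).
Proof.
move=> Hp; rewrite /inS; apply: (iffP idP) => [/set0Pn [c Hc]|[x Hx]].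
  exists (toN c); apply/eqP; by rewrite -mem_fact.
have [c Hc _] := mk_fact Hp Hx; apply/set0Pn; by exists c.
Qed.

Lemma ord_ge g n x : posg g -> sumg g x = n -> lenN (size g) x <= ordG g n.
Proof.
move=> Hp Hs; have [c Hc Hv] := mk_fact Hp Hs.
rewrite /Defs.ordS; apply: leq_trans (leq_bigmax_cond _ Hc).
rewrite flenE; apply: eq_leq; apply lenN_ext => i Hi.
by change i with (nat_of_ord (Ordinal Hi)); rewrite toN_val Hv.
Qed.

Lemma ord_att g n : inS g n -> exists x, sumg g x = n /\ lenN (size g) x = ordG g n.
Proof.
move=> /set0Pn H.
have Hc : 0 < #|fact_set g n| by rewrite card_gt0; apply/set0Pn.
have [c Hc' Heq] := eq_bigmax_cond (@flen _ _) Hc.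
exists (toN c); split; first by apply/eqP; rewrite -mem_fact.
by rewrite /Defs.ordS Heq flenE.
Qed.

Lemma card_inj (g1 g2 : seq nat) (n m : nat) (A : {set {ffun 'I_(size g1) -> 'I_n.+1}})
  (P2 : pred {ffun 'I_(size g2) -> 'I_m.+1}) (h : (nat -> nat) -> nat -> nat) :
  posg g2 ->
  (forall c, c \in A -> sumg g2 (h (toN c)) = m) ->
  (forall c, c \in A -> forall c2 : {ffun 'I_(size g2) -> 'I_m.+1},
     (forall j : 'I_(size g2), (c2 j : nat) = h (toN c) j) -> P2 c2) ->
  (forall c c', c \in A -> c' \in A ->
     (forall i, i < size g2 -> h (toN c) i = h (toN c') i) -> c = c') ->
  #|A| <= #|[set c2 in fact_set g2 m | P2 c2]|.
Proof.
move=> Hp Hs HP Hinj.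
pose H (c : {ffun 'I_(size g1) -> 'I_n.+1}) := [ffun j : 'I_(size g2) => (inord (h (toN c) j) : 'I_m.+1)].
have HH : forall c, c \in A -> forall j : 'I_(size g2), (H c j : nat) = h (toN c) j.
  move=> c Hc j; rewrite ffunE inordK // ltnS -(Hs c Hc); exact: term_le.
rewrite -(card_in_imset (f := H)); last first.
  move=> c c' Hc Hc' E; apply: Hinj => // i Hi.
  by rewrite -(HH c Hc (Ordinal Hi)) -(HH c' Hc' (Ordinal Hi)) E.
apply: subset_leq_card; apply/subsetP => y /imsetP [c Hc ->].
rewrite inE; apply/andP; split; last exact: HP c Hc _ (HH c Hc).
rewrite mem_fact; apply/eqP; rewrite -{2}(Hs c Hc); apply sumg_ext => i Hi.
by change i with (nat_of_ord (Ordinal Hi)); rewrite toN_val HH.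
Qed.

Section Apery.
Variables (P : pred nat) (e : nat).
Hypothesis e_pos : 0 < e.
Hypothesis Pe : forall n, P n -> P (n + e).
Hypothesis cof : exists N, forall n, N <= n -> P n.

Definition inApP w := P w && ~~ ((e <= w) && P (w - e)).
Definition apidx w := count inApP (iota 0 w).

Lemma Pk n k : P n -> P (n + k * e).
Proof.
move=> H; elim: k => [|k IH]; first by rewrite addn0.
by rewrite mulSnr addnA; apply: Pe.
Qed.

Lemma modsplit v w : v <= w -> v %% e = w %% e -> exists q, w = v + q * e.
Proof.
move=> Hvw Hm; exists (w %/ e - v %/ e); rewrite mulnBl.
have Hd := leq_div2r e Hvw.
have Hle : v %/ e * e <= w %/ e * e by rewrite leq_mul2r Hd orbT.
have Ev := divn_eq v e; have Ew := divn_eq w e.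
move: Ev Ew Hle; rewrite Hm; move: (v %/ e * e) (w %/ e * e) (w %% e) => a b r.
lia.
Qed.

Lemma apex r : exists n, P n && (n %% e == r %% e).
Proof.
case: cof => N HN; exists (N * e + r); rewrite modnMDl eqxx andbT; apply HN.
by apply: leq_trans (leq_pmulr N e_pos) (leq_addr _ _).
Qed.

Definition ap r := ex_minn (apex r).

Lemma apP r : [/\ P (ap r), ap r %% e = r %% e &
  forall n, P n -> n %% e = r %% e -> ap r <= n].
Proof.
rewrite /ap; case: ex_minnP => n /andP [Hn /eqP Hm] Hmin; split => // k Hk Hkm.
by apply Hmin; rewrite Hk Hkm eqxx.
Qed.

Lemma Ap_min w v : inApP w -> P v -> v %% e = w %% e -> w <= v.
Proof.
case/andP => Hw Hn Hv Hm; rewrite leqNgt; apply/negP => Hlt.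
have [q Hq] := modsplit (ltnW Hlt) Hm.
case: q Hq => [|q] Hq; first by rewrite Hq mul0n addn0 ltnn in Hlt.
apply: (negP Hn); apply/andP; split; first by rewrite Hq mulSn; lia.
have -> : w - e = v + q * e by rewrite Hq mulSn; lia.
exact: Pk.
Qed.

Lemma Ap_uniq w w' : inApP w -> inApP w' -> w %% e = w' %% e -> w = w'.
Proof.
move=> H H' Hm; apply/eqP; rewrite eqn_leq.
have Pw : P w by case/andP: H.
have Pw' : P w' by case/andP: H'.
by rewrite (Ap_min H Pw') // (Ap_min H' Pw).
Qed.

Lemma ap_inAp r : inApP (ap r).
Proof.
case: (apP r) => HP Hm Hmin; rewrite /inApP HP /=; apply/negP => /andP [He HPe].
have Hmm : (ap r - e) %% e = r %% e by rewrite -Hm -{2}(subnK He) modnDr.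
have := Hmin _ HPe Hmm; lia.
Qed.

Lemma Ap_decomp n : P n -> exists w k, inApP w /\ n = w + k * e.
Proof.
move=> Hn; case: (apP n) => _ Hm Hmin.
have [q Hq] := modsplit (Hmin n Hn erefl) Hm.
exists (ap n), q; split => //; exact: ap_inAp.
Qed.

Lemma ap_res z : exists w, inApP w /\ w %% e = z %% e.
Proof. exists (ap z); split; [exact: ap_inAp | by case: (apP z)]. Qed.

Lemma apidx_lt w : inApP w -> apidx w < e.
Proof.
move=> Hw; rewrite /apidx -size_filter.
set s := filter inApP (iota 0 w).
have Hs : uniq s by rewrite filter_uniq // iota_uniq.
have Hu : uniq (map (modn^~ e) s).
  rewrite map_inj_in_uniq // => x y; rewrite !mem_filter => /andP [Hx _] /andP [Hy _] Hxy.
  exact: Ap_uniq.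
have Hsub : {subset map (modn^~ e) s <= rem (w %% e) (iota 0 e)}.
  move=> y /mapP [x]; rewrite mem_filter mem_iota => /andP [Hx /andP [_ Hxw]] ->.
  rewrite (mem_rem_uniq _ (iota_uniq 0 e)) inE mem_iota /= ltn_pmod // andbT.
  apply/negP => /eqP E; have := Ap_uniq Hx Hw E; lia.
have := uniq_leq_size Hu Hsub.
rewrite size_map size_rem ?size_iota; last by rewrite mem_iota ltn_pmod.
lia.
Qed.

Lemma apidx_mono a b : inApP a -> a < b -> apidx a < apidx b.
Proof.
move=> Ha Hab; have [k ->] : exists k, b = a + k.+1 by exists (b - a).-1; lia.
rewrite /apidx iotaD count_cat /= Ha; lia.
Qed.

Lemma ApIdxSurj j : j < e -> exists w, inApP w /\ apidx w = j.
Proof.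
pose F (r : 'I_e) : 'I_e := Ordinal (apidx_lt (ap_inAp r)).
have Finj : injective F.
  move=> r r' /(congr1 val) /= E.
  have Hrr : ap r = ap r'.
    case: (ltngtP (ap r) (ap r')) => // H.
    - have := apidx_mono (ap_inAp r) H; lia.
    - have := apidx_mono (ap_inAp r') H; lia.
  apply: val_inj => /=.
  case: (apP r) => _ H1 _; case: (apP r') => _ H2 _.
  rewrite Hrr H2 !modn_small // in H1.
move=> Hj; case: (injF_bij Finj) => Fi FK KF.
exists (ap (Fi (Ordinal Hj))); split; first exact: ap_inAp.
by move/(congr1 val): (KF (Ordinal Hj)).
Qed.

End Apery.

Section Main.
Variables (e : nat) (g' : seq nat).
Hypothesis e_pos : 0 < e.
Hypothesis Hg : forall j, j < size g' -> e < nth 0 g' j.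
Hypothesis cof : exists N, forall n, N <= n -> inS (e :: g') n.
Hypothesis Hadd : additive (e :: g').
Hypothesis Hsym : forall wi wj wm, inAp (e::g') wi -> inAp (e::g') wj -> inAp (e::g') wm ->
    ap_index (e::g') wm = (mult (e::g')).-1 ->
    ap_index (e::g') wi + ap_index (e::g') wj = (mult (e::g')).-1 ->
    wi + wj = wm /\ ordG (e::g') wi + ordG (e::g') wj = ordG (e::g') wm.

Local Notation gs := (e :: g').
Local Notation D := (blowup (e :: g')).
Local Notation K := (size g').+1.

Lemma sizeD : size D = K. Proof. by rewrite /= size_map. Qed.

Lemma posS : posg gs.
Proof. move=> [|j] /= H //; have := Hg H; lia. Qed.

Lemma posD : posg D.
Proof. move=> [|j]; rewrite sizeD => H //=; rewrite (nth_map 0) //; have := Hg H; lia. Qed.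

Lemma keyId x : sumg gs x = lenN K x * e + sumg D (zero0 x).
Proof.
rewrite (sumg_split x (g := gs)) // (lenN_split x (K := K)) //=.
have -> : sumg gs (zero0 x) = lenN K (zero0 x) * e + sumg D (zero0 x).
  rewrite /sumg /lenN sizeD big_distrl -big_split /=; apply eq_bigr => [[[|j] Hj]] _ /=.
    by rewrite /zero0 /= !mul0n.
  rewrite (nth_map 0) // -mulnDr subnKC //; exact: ltnW (Hg Hj).
rewrite mulnDl; lia.
Qed.

Lemma Pe_S n : inS gs n -> inS gs (n + e).
Proof.
move=> /(inSP _ posS) [x Hx]; apply/(inSP _ posS).
exists (fun i => x i + delta0 1 i); by rewrite sumgD sumg_delta // Hx mul1n.
Qed.

Lemma Pe_D n : inS D n -> inS D (n + e).
Proof.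
move=> /(inSP _ posD) [x Hx]; apply/(inSP _ posD).
exists (fun i => x i + delta0 1 i); by rewrite sumgD sumg_delta ?sizeD // Hx mul1n.
Qed.

Lemma ordAdd u k : inS gs u -> inS gs (u + k * e) /\ ordG gs (u + k * e) = ordG gs u + k.
Proof.
move=> Hu; split; first exact: @Pk (inS gs) e (@Pe_S) u k Hu.
elim: k => [|k IH]; first by rewrite mul0n !addn0.
rewrite mulSnr addnA (Hadd (@Pk (inS gs) e (@Pe_S) u k Hu)) IH; lia.
Qed.

Lemma maxrep n : inS gs n -> exists x, sumg gs x = n /\ lenN K x = ordG gs n.
Proof. exact: ord_att. Qed.

Lemma existsW : exists W, inAp gs W /\ ap_index gs W = e.-1.
Proof. apply: (@ApIdxSurj (inS gs) e e_pos (@Pe_S) cof); lia. Qed.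

Section WithW.
Variable W : nat.
Hypothesis HW : inAp gs W.
Hypothesis HWi : ap_index gs W = e.-1.
Variable xW : nat -> nat.
Hypothesis HxW1 : sumg gs xW = W.
Hypothesis HxW2 : lenN K xW = ordG gs W.
Local Notation m := (sumg D (zero0 xW)).
Local Notation LW := (ordG gs W).

Lemma W_eq : W = LW * e + m.
Proof. by rewrite -{1}HxW1 keyId HxW2. Qed.

Lemma ordW : inS gs W. Proof. by case/andP: HW. Qed.

Lemma partner w : inAp gs w ->
  exists w', inAp gs w' /\ w + w' = W /\ ordG gs w + ordG gs w' = LW.
Proof.
move=> Hw; have Hi : ap_index gs w < e := @apidx_lt (inS gs) e e_pos (@Pe_S) w Hw.
have [w' [Hw' Hi']] := @ApIdxSurj (inS gs) e e_pos (@Pe_S) cof (e.-1 - ap_index gs w)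
  ltac:(lia).
exists w'; split => //; apply: Hsym => //.
have Hi'' : ap_index gs w' = e.-1 - ap_index gs w := Hi'.
rewrite Hi'' /=; lia.
Qed.

Lemma compl n : inS gs n -> exists y, forall x, sumg gs x = n -> lenN K x = ordG gs n ->
  sumg D (zero0 x) + sumg D y = m.
Proof.
move=> Hn; have [w [k [Hw Hnk]]] := @Ap_decomp (inS gs) e e_pos cof n Hn.
have Pw : inS gs w by case/andP: Hw.
have [_ Hord] := ordAdd k Pw.
have [w' [Hw' [Hsum Hords]]] := partner Hw.
have Pw' : inS gs w' by case/andP: Hw'.
have [y [Hy1 Hy2]] := maxrep Pw'.
exists (zero0 y) => x Hx1 Hx2.
have E1 := keyId x; have E2 := keyId y; have E3 := W_eq.
rewrite Hx1 Hx2 Hnk Hord mulnDl in E1; rewrite Hy1 Hy2 in E2.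
rewrite -Hords mulnDl in E3; lia.
Qed.

Lemma phi_le w x : inAp gs w -> sumg gs x = w -> lenN K x = ordG gs w ->
  sumg D (zero0 x) <= m.
Proof.
move=> Hw H1 H2; have Pw : inS gs w by case/andP: Hw.
have [y Hy] := compl Pw; have := Hy x H1 H2; lia.
Qed.

Lemma noBm : e <= m -> ~~ inS D (m - e).
Proof.
move=> Hem; apply/negP => /(inSP _ posD) [z Hz].
have Hzs := sumg_split z (g := D) isT; rewrite /= in Hzs.
set Z := lenN K (zero0 z).
have HZ : Z <= sumg D (zero0 z) by have := len_le_sum (zero0 z) posD; rewrite sizeD.
pose c := fun i => zero0 z i + delta0 (LW + 1 + z 0 + m - Z) i.
have Hz0 : forall i, i < size D -> zero0 c i = zero0 z i.
  by move=> [|i] _; rewrite /c /zero0 /delta0 /= ?addn0.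
have Hlc : lenN K c = LW + 1 + z 0 + m.
  rewrite /c lenND lenN_delta // -/Z; lia.
have Hc1 : sumg gs c = W + m * e.
  have E := W_eq; rewrite keyId (sumg_ext Hz0) Hlc !mulnDl mul1n; lia.
have Hle := ord_ge posS Hc1.
have [_ Hord] := ordAdd m ordW.
rewrite Hord /= Hlc in Hle; lia.
Qed.

Lemma F2 z : ~~ inS D z -> z + e <= m.
Proof.
move=> Hz; have [w [Hw Hwz]] := @ap_res (inS gs) e e_pos cof z.
have Pw : inS gs w by case/andP: Hw.
have [x [Hx1 Hx2]] := maxrep Pw.
have Hle := phi_le Hw Hx1 Hx2.
have Hwp := keyId x; rewrite Hx1 Hx2 in Hwp.
set p := sumg D (zero0 x) in Hle Hwp.
have Hpm : p %% e = z %% e by rewrite -Hwz Hwp modnMDl.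
have pB : inS D p by apply/(inSP _ posD); exists (zero0 x).
case: (leqP p z) => Hpz.
  have [q Hq] := modsplit e_pos Hpz Hpm.
  by have := @Pk (inS D) e (@Pe_D) p q pB; rewrite -Hq (negbTE Hz).
have [q Hq] := modsplit e_pos (ltnW Hpz) (esym Hpm).
case: q Hq => [|q] Hq; first by move: Hpz; rewrite Hq mul0n addn0 ltnn.
move: Hq; rewrite mulSn; lia.
Qed.

Lemma F3 : e.-1 <= m.
Proof.
have [w [Hw Hwz]] := @ap_res (inS gs) e e_pos cof e.-1.
have Pw : inS gs w by case/andP: Hw.
have [x [Hx1 Hx2]] := maxrep Pw.
have Hle := phi_le Hw Hx1 Hx2.
have Hwp := keyId x; rewrite Hx1 Hx2 in Hwp.
set p := sumg D (zero0 x) in Hle Hwp.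
have Hpm : p %% e = e.-1 by rewrite -(@modn_small e.-1 e) ?prednK // -Hwz Hwp modnMDl; lia.
have := leq_mod p e; lia.
Qed.


Lemma dmax_le n : inS gs n -> dmax gs n <= #|fact_set D m|.
Proof.
move=> Hn; have [y Hy] := compl Hn.
apply: (@leq_trans #|[set c2 in fact_set D m | predT c2]|); last first.
  by apply: subset_leq_card; apply/subsetP => c; rewrite inE => /andP [].
apply: (card_inj (h := fun x i => zero0 x i + y i)) posD _ _ _.
- move=> c; rewrite inE => /andP [Hc Hl] /=; rewrite sumgD; apply: Hy.
    by apply/eqP; rewrite -mem_fact.
  by rewrite -flenE; apply/eqP.
- by [].
move=> c c'; rewrite !inE => /andP [Hc /eqP Hl] /andP [Hc' /eqP Hl'] E.
have Ez : forall i, i < K -> zero0 (toN c) i = zero0 (toN c') i.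
  move=> i Hi; have := E i; rewrite sizeD => /(_ Hi) /= /eqP.
  by rewrite eqn_add2r => /eqP.
have E0 : toN c 0 = toN c' 0.
  rewrite flenE in Hl; rewrite flenE in Hl'.
  have := lenN_split (toN c) (K := K) isT; have := lenN_split (toN c') (K := K) isT.
  rewrite (lenN_ext Ez) /= Hl Hl'; lia.
apply/ffunP => j; apply: val_inj; change (nat_of_ord (c j) = nat_of_ord (c' j)); rewrite -!toN_val.
case: j => [[|j] Hj] /=; first exact: E0.
by have := Ez j.+1 Hj; rewrite /zero0.
Qed.

Lemma attain : exists n, inS gs n /\ dmax gs n = #|fact_set D m|.
Proof.
have [Hn0 Hord] := ordAdd m ordW.
exists (W + m * e); split => //; apply/eqP; rewrite eqn_leq dmax_le //=.
have Hfacts : forall c, c \in fact_set D m -> toN c 0 = 0 /\ sumg D (zero0 (toN c)) = m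
    /\ lenN K (toN c) = lenN K (zero0 (toN c)) /\ lenN K (toN c) <= m.
  move=> c Hc; have Hs : sumg D (toN c) = m by apply/eqP; rewrite -mem_fact.
  have Hsp := sumg_split (toN c) (g := D) isT; rewrite /= in Hsp.
  have Hl := lenN_split (toN c) (K := K) isT.
  have Hle : lenN K (toN c) <= m by have := len_le_sum (toN c) posD; rewrite Hs; move: (toN c) => X; rewrite sizeD.
  have H0 : toN c 0 = 0.
    move: Hsp Hs; case: (toN c 0) => [//|q]; rewrite mulSn => Hsp Hs.
    have HB : inS D (sumg D (zero0 (toN c)) + q * e).
      apply: (@Pk (inS D) e (@Pe_D)); apply/(inSP _ posD); by exists (zero0 (toN c)).
    move: Hsp Hs HB; move: (sumg D (toN c)) (sumg D (zero0 (toN c))) => T S0 Hsp Hs HB.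
    have Hem : e <= m by lia.
    have := noBm Hem; rewrite (_ : m - e = S0 + q * e) ?HB //; lia.
  rewrite H0 in Hsp Hl; split => //; split; first by rewrite Hsp mul0n addn0 in Hs.
  by split => //; rewrite Hl addn0.
pose h := fun (x : nat -> nat) i => if i == 0 then (LW + m) - lenN K x else x i.
have Hh : forall c, c \in fact_set D m -> lenN K (h (toN c)) = LW + m /\
    sumg D (zero0 (h (toN c))) = m.
  move=> c Hc; have [H0 [Hs [Hl Hle]]] := Hfacts c Hc.
  move: (toN c) H0 Hs Hl Hle => X H0 Hs Hl Hle.
  have Hz : forall i, zero0 (h X) i = zero0 X i by move=> [|i].
  rewrite (lenN_split (h X) (K := K)) //.
  rewrite (sumg_ext (g := D) (x := zero0 (h X)) (y := zero0 X)); last by move=> i _; exact: Hz.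
  rewrite (lenN_ext (x := zero0 (h X)) (y := zero0 X)); last by move=> i _; exact: Hz.
  split => //; rewrite /h /=; lia.
rewrite /dmax. have := (@card_inj D gs m (W + m * e) (fact_set D m) (fun c2 => flen c2 == ordG gs (W + m * e)) h posS); apply.
- move=> c Hc; have [H1 H2] := Hh c Hc; have E := W_eq.
  rewrite keyId H1 H2 mulnDl; lia.
- move=> c Hc c2 Hc2; rewrite flenE Hord; apply/eqP.
  rewrite (lenN_ext (y := h (toN c))); first by have [-> _] := Hh c Hc.
  by move=> i Hi; change i with (nat_of_ord (Ordinal Hi)); rewrite toN_val Hc2.
move=> c c' Hc Hc' E.
apply/ffunP => j; apply: val_inj; change (nat_of_ord (c j) = nat_of_ord (c' j)); rewrite -!toN_val.
case: j => [[|j] Hj] /=.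
  by have [-> _] := Hfacts c Hc; have [-> _] := Hfacts c' Hc'.
have Hj' : j.+1 < size gs by rewrite sizeD in Hj.
by have := E j.+1 Hj'.
Qed.

Lemma frob_m f : frobenius D f -> `|(f + e%:Z)%R|%N = m.
Proof.
case=> H1 H2.
have Hnm : e <= m -> inS D (m - e) -> False by move=> Ha Hb; have := noBm Ha; rewrite Hb.
case: f H1 H2 => [a|b] H1 H2.
  have Ha : ~~ inS D a by move: H1.
  have Hle := F2 Ha.
  rewrite -PoszD /=.
  case: (ltnP (a + e) m) => Hlt; last lia.
  have /andP [_ Hm] := H2 (Posz (m - e)) ltac:(lia).
  by case: (Hnm ltac:(lia)).
case: b H1 H2 => [|b] H1 H2; last first.
  have := H2 (Negz 0); rewrite !NegzE Num.Theory.ltrN2 ltz_nat => /(_ isT) /andP [].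
  by [].
have Hme : m < e.
  rewrite ltnNge; apply/negP => Hem.
  have /andP [_ Hm] := H2 (Posz (m - e)) isT.
  exact: Hnm Hem Hm.
have := F3; rewrite NegzE GRing.addrC subzn // subn1; lia.
Qed.

End WithW.
Lemma core f : frobenius D f -> is_dmaxS gs #|fact_set D `|(f + e%:Z)%R|%N|.
Proof.
move=> Hf; have [W [HW HWi]] := existsW.
have PW : inS gs W by case/andP: HW.
have [xW [H1 H2]] := maxrep PW.
rewrite (frob_m HW HWi H1 H2 Hf); split; first by have := attain HW HWi H1 H2.
by move=> n Hn; have := dmax_le HW HWi H1 H2 Hn.
Qed.

End Main.

Theorem theorem4p12 (g : seq nat) :
  num_semigroup_mingens g -> supersymmetric g ->
  forall f : int, frobenius (blowup g) f ->
  is_dmaxS g #|fact_set (blowup g) (absz (f + (mult g)%:Z)%R)|.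
Proof.
case: g => [|e g'] [Hm Hs Hc Hmin] [Hadd Hsym] f Hf; first by [].
have e_pos : 0 < e := Hm.
have Hg : forall j, j < size g' -> e < nth 0 g' j.
  move=> j Hj; have := order_path_min ltn_trans Hs => /(all_nthP 0) H; exact: H j Hj.
exact: (core e_pos Hg Hc Hadd Hsym Hf).
Qed.
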